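(* Let $H$ be a real Hilbert space, $\mathcal{I}$ a finite index set, $J,g_i:H\to\mathbb{R}$ ($i\in\mathcal{I}$) $\mathcal{C}^1$ functions, $\Omega=\{u\in H: g_i(u)\le 0\ \forall i\in\mathcal{I}\}$, and assume that for every $u\in\Omega$ with $I_A(u)\ne\emptyset$ the vectors $\{g_i'(u): i\in I_A(u)\}$ are linearly independent. Suppose $u\in\Omega$ is not a KKT point of the problem of minimizing $J$ over $\Omega$, and let $u(t)=u+t\,d_W(u)+\sum_{i\in I_W(u)}c_i(t)g_i'(u)$, where the functions $c_i$ ($i\in I_W(u)$), defined for small $t>0$, are such that $u(t)\in\Omega$, $g_i(u(t))=0$ for all $i\in I_W(u)$, $c_i(t)=o(t)$ for all $i\in I_W(u)$, and $\|\sum_{i\in I_W(u)}c_i(t)g_i'(u)\|=o(t)$ as $t\to0^+$. Then there exists $t_0>0$ depending on $u$ such that $$J(u(t))-J(u)<-\frac{t}{2}\|d_W(u)\|^2\quad\text{for all } 0<t<t_0.$$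
   Context: $J'(u)$, $g_i'(u)$ denote gradients in $H$; $\mathbb{P}_C$ is the metric projection onto a closed convex set $C$. For $u\in\Omega$: $I_A(u)=\{i\in\mathcal{I}: g_i(u)=0\}$; $C_A(u)=\{\sum_{i\in I_A(u)}a_ig_i'(u): a_i\ge0\}$ ($=\{0\}$ if empty); $d_A(u)=-J'(u)-\mathbb{P}_{C_A(u)}(-J'(u))$; $I_W(u)=\{i\in I_A(u): \langle g_i'(u), d_A(u)\rangle=0\}$; $C_W(u)=\{\sum_{i\in I_W(u)}a_ig_i'(u): a_i\ge 0\}$ ($=\{0\}$ if empty); $d_W(u)=-J'(u)-\mathbb{P}_{C_W(u)}(-J'(u))$. A point $u\in\Omega$ is a KKT point if there exist $\mu_i\ge0$ with $-J'(u)=\sum_{i\in\mathcal{I}}\mu_i g_i'(u)$ and $\mu_i g_i(u)=0$ for all $i$. (Such functions $c_i$ exist for non-KKT $u$.) *)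

(* Defs.v *)
From HB Require Import structures.
From mathcomp Require Import all_boot all_order all_algebra.
From mathcomp Require Import all_classical all_reals all_analysis.
Set Implicit Arguments. Unset Strict Implicit. Unset Printing Implicit Defensive.
Import Order.TTheory GRing.Theory Num.Theory.
Import numFieldNormedType.Exports.
Local Open Scope classical_set_scope.
Local Open Scope ring_scope.

(* A real inner product compatible with the norm of H (so that a complete
   normed space carrying it is a real Hilbert space). *)
Definition is_inner_product {R : realType} {H : normedModType R}
  (inner : H -> H -> R) : Prop :=
  [/\ (forall x y, inner x y = inner y x),
      (forall (a : R) x y z, inner (a *: x + y) z = a * inner x z + inner y z)
    & (forall x, inner x x = `|x| ^+ 2)].

Definition C1_with_gradient {R : realType} {H : normedModType R}
  (inner : H -> H -> R) (f : H -> R) (df : H -> H) : Prop :=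
  (forall u, differentiable f u /\ forall v, 'd f u v = inner (df u) v)
  /\ continuous df.

(* metric projection onto C (unique for C closed convex in a Hilbert space) *)
Definition proj {R : realType} {H : normedModType R} (C : set H) (x : H) : H :=
  xget 0 [set p | C p /\ forall q, C q -> `|x - p| <= `|x - q|].

Section Defs.
Context {R : realType} {H : normedModType R} {I : finType}.
Variables (inner : H -> H -> R) (J : H -> R) (dJ : H -> H)
          (g : I -> H -> R) (dg : I -> H -> H).

Definition Omega : set H := [set u | forall i, g i u <= 0].

Definition IA (u : H) : {set I} := [set i | g i u == 0].

Definition cone (S : {set I}) (u : H) : set H :=
  [set x | exists a : I -> R, (forall i, 0 <= a i) /\
           x = \sum_(i in S) a i *: dg i u].

Definition CA (u : H) : set H := cone (IA u) u.
Definition dA (u : H) : H := - dJ u - proj (CA u) (- dJ u).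
Definition IW (u : H) : {set I} :=
  [set i in IA u | inner (dg i u) (dA u) == 0].
Definition CW (u : H) : set H := cone (IW u) u.
Definition dW (u : H) : H := - dJ u - proj (CW u) (- dJ u).

Definition lin_indep (S : {set I}) (u : H) : Prop :=
  forall a : I -> R, \sum_(i in S) a i *: dg i u = 0 ->
    forall i, i \in S -> a i = 0.

Definition is_KKT (u : H) : Prop :=
  Omega u /\ exists mu : I -> R, (forall i, 0 <= mu i) /\
    - dJ u = \sum_i mu i *: dg i u /\ (forall i, mu i * g i u = 0).
End Defs.

(* Main.v *)
Require Import Defs.
From HB Require Import structures.
From mathcomp Require Import all_boot all_order all_algebra.
From mathcomp Require Import all_classical all_reals all_analysis.
From mathcomp Require Import ring lra.
Import Order.TTheory GRing.Theory Num.Theory.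
Import numFieldNormedType.Exports.
Local Open Scope classical_set_scope.
Local Open Scope ring_scope.
Section Inner.
Context {R : realType} {H : normedModType R} {inner : H -> H -> R}.
Hypothesis ip : is_inner_product inner.

Lemma innerDl x y z : inner (x + y) z = inner x z + inner y z.
Proof. by case: ip => _ L _; rewrite -[x in LHS]scale1r L mul1r. Qed.
Lemma inner0l z : inner 0 z = 0.
Proof.
have := innerDl 0 0 z; rewrite addr0 => /eqP.
by rewrite -subr_eq0 opprD addrA subrr sub0r oppr_eq0 => /eqP.
Qed.
Lemma innerZl a x z : inner (a *: x) z = a * inner x z.
Proof. by case: ip => _ L _; rewrite -[a *: x]addr0 L inner0l addr0. Qed.
Lemma innerNl x z : inner (- x) z = - inner x z.
Proof. by rewrite -scaleN1r innerZl mulN1r. Qed.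
Lemma innerC x y : inner x y = inner y x.
Proof. by case: ip. Qed.
Lemma innerDr x y z : inner z (x + y) = inner z x + inner z y.
Proof. by rewrite innerC innerDl !(innerC z). Qed.
Lemma innerZr a x z : inner z (a *: x) = a * inner z x.
Proof. by rewrite innerC innerZl innerC. Qed.
Lemma innerNr x z : inner z (- x) = - inner z x.
Proof. by rewrite innerC innerNl innerC. Qed.
Lemma innerxx x : inner x x = `|x| ^+ 2.
Proof. by case: ip. Qed.
End Inner.

Lemma proj_cone {R : realType} {H : normedModType R} (inner : H -> H -> R)
  (ip : is_inner_product inner) (C : set H) x :
  C 0 -> (forall s p, 0 <= s -> C p -> C (s *: p)) ->
  C (Defs.proj C x) /\ 0 <= inner (Defs.proj C x) (x - Defs.proj C x).
Proof.
move=> C0 Cs; rewrite /Defs.proj; case: xgetP => [p _ [Cp minp] | _]; last first.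
  by split=> //; rewrite inner0l.
split=> //.
set D := x - p.
have key : forall e, 0 < e <= 1 -> 0 <= 2 * inner p D + e * inner p p.
  move=> e /andP[e0 e1].
  have Cq : C ((1 - e) *: p) by apply: Cs => //; lra.
  have := minp _ Cq.
  have -> : x - (1 - e) *: p = D + e *: p.
    by rewrite /D scalerBl scale1r opprB addrA addrAC -addrA [- p + _]addrC.
  move=> hle.
  have h2 : `|D| ^+ 2 <= `|D + e *: p| ^+ 2.
    have := normr_ge0 D; nra.
  move: h2; rewrite -!(innerxx ip) !(innerDl ip, innerDr ip, innerZl ip, innerZr ip).
  rewrite /D !(innerDl ip, innerDr ip, innerZl ip, innerZr ip, innerNl ip, innerNr ip).
  rewrite (innerC ip x p) => h2.
  have : 0 <= e * (2 * (inner p x + - inner p p) + e * inner p p).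
  move: h2; set a := inner p x; set P := inner p p; set X := inner x x; nra.
  by rewrite pmulr_rge0.
have P0 : 0 <= inner p p by rewrite (innerxx ip) sqr_ge0.
rewrite leNgt; apply/negP => a0.
have [Pa|Pa] := lerP (inner p p) (- inner p D).
  have := key 1; rewrite ltr01 lexx /= => /(_ isT); lra.
have Ppos : 0 < inner p p by lra.
have := key (- inner p D / inner p p).
rewrite divr_gt0 ?ler_pdivrMr //=; last lra.
rewrite mul1r ltW //= divfK ?gt_eqF //; lra.
Qed.

Theorem lemma5 (R : realType) (H : completeNormedModType R) (I : finType)
  (inner : H -> H -> R) (J : H -> R) (dJ : H -> H)
  (g : I -> H -> R) (dg : I -> H -> H) :
  is_inner_product inner ->
  C1_with_gradient inner J dJ ->
  (forall i, C1_with_gradient inner (g i) (dg i)) ->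
  (forall u, Omega g u -> IA g u != finset.set0 -> lin_indep dg (IA g u) u) ->
  forall (u : H) (c : I -> R -> R),
  Omega g u ->
  ~ is_KKT dJ g dg u ->
  let ut := fun t : R =>
    u + t *: dW inner dJ g dg u + \sum_(i in IW inner dJ g dg u) c i t *: dg i u in
  (\forall t \near 0^'+, Omega g (ut t) /\
      forall i, i \in IW inner dJ g dg u -> g i (ut t) = 0) ->
  (forall i, i \in IW inner dJ g dg u -> (fun t => c i t / t) @ 0^'+ --> 0) ->
  ((fun t => `|\sum_(i in IW inner dJ g dg u) c i t *: dg i u| / t) @ 0^'+ --> 0) ->
  exists2 t0 : R, 0 < t0 &
    forall t : R, 0 < t < t0 ->
      J (ut t) - J u < - (t / 2) * `|dW inner dJ g dg u| ^+ 2.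
Proof.
move=> ip hJ hg _ u c Omu nK ut _ _ hr.
set S := IW inner dJ g dg u in ut hr *.
set D := dW inner dJ g dg u in ut *.
set r := fun t => \sum_(i in S) c i t *: dg i u in hr.
have Dxp : D = - dJ u - Defs.proj (cone dg S u) (- dJ u) by [].
set x := - dJ u in Dxp.
set p := Defs.proj (cone dg S u) x in Dxp.
have [Cp pD] : cone dg S u p /\ 0 <= inner p (x - p).
  apply: proj_cone => //.
    by exists (fun _ => 0); split=> // ; rewrite big1 // => i _; rewrite scale0r.
  move=> s q s0 [a [a0 ->]]; exists (fun i => s * a i); split.
    by move=> i; rewrite mulr_ge0.
  by rewrite scaler_sumr; apply: eq_bigr => i _; rewrite scalerA.
rewrite -Dxp in pD.
have D0 : D != 0.
  apply/negP => /eqP D0; apply: nK; split => //.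
  case: Cp => a [a0 pa].
  exists (fun i => if i \in S then a i else 0); split; last split.
  - by move=> i; case: ifP.
  - have : x = p by apply/eqP; rewrite -subr_eq0 -Dxp D0.
    rewrite /x => ->; rewrite pa big_mkcond /=; apply: eq_bigr => i _.
    by case: ifP => // _; rewrite scale0r.
  - move=> i; case: ifP => hi; last by rewrite mul0r.
    move: hi; rewrite /S /IW inE /IA inE => /andP[/eqP -> _]; by rewrite mulr0.
case: (hJ.1 u) => difJ dJin.
have LD : 'd J u D = - (`|D| ^+ 2) - inner p D.
  rewrite dJin (_ : dJ u = - (D + p)); last by rewrite Dxp subrK opprK.
  by rewrite (innerNl ip) (innerDl ip) (innerxx ip) (innerC ip) opprD.
have dpos : 0 < `|D| ^+ 2 by rewrite exprn_gt0 // normr_gt0.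
have [M M0 HM] : exists2 M : R, 0 < M & forall y, `|'d J u y| <= M * `|y|.
  have : continuous ('d J u) := diff_continuous difJ.
  by move/linear_bounded_continuous/linear_boundedP/pinfty_ex_gt0.
set eps := `|D| ^+ 2 / (4 * (`|D| + 1)).
have eps0 : 0 < eps by rewrite divr_gt0 // mulr_gt0 // ltr_pwDr.
have [eta eta0 Heta] : exists2 eta : R, 0 < eta & forall h, `|h| < eta ->
    `|J (u + h) - J u - 'd J u h| <= eps * `|h|.
  have := diff_locally difJ; move/eqaddoP => lo.
  have := lo eps eps0; move/nbhs_norm0P => [eta eta0 He]; exists eta => // h hh.
  have := He h hh; congr (`|_| <= _).
  by rewrite !fctE /= [h + u]addrC opprD addrA.
set e1 := `|D| ^+ 2 / (4 * M).
have e10 : 0 < e1 by rewrite divr_gt0 // mulr_gt0.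
have ND0 : 0 < `|D| + 1 by rewrite ltr_pwDr.
have Hn : \forall t \near 0^'+, J (ut t) - J u < - (t / 2) * `|D| ^+ 2.
  near=> t.
  have t0 : 0 < t by near: t; exact: nbhs_right_gt.
  have r1 : `|(`|r t| / t)| < 1 by near: t; exact: (cvgr0_norm_lt _ hr).
  have r2 : `|(`|r t| / t)| < e1 by near: t; exact: (cvgr0_norm_lt _ hr).
  have te : t < eta / (`|D| + 1) by near: t; apply: nbhs_right_lt; rewrite divr_gt0.
  have nn : 0 <= `|r t| / t by rewrite divr_ge0 // ltW.
  rewrite (ger0_norm nn) ltr_pdivrMr // in r1.
  rewrite (ger0_norm nn) ltr_pdivrMr // in r2.
  rewrite ltr_pdivlMr // in te.
  rewrite mul1r in r1.
  have ute : ut t = u + (t *: D + r t) by rewrite /ut addrA.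
  set h := t *: D + r t in ute.
  have hn : `|h| <= t * `|D| + `|r t|.
    by rewrite (le_trans (ler_normD _ _)) // normrZ gtr0_norm.
  have heta : `|h| < eta by apply: (le_lt_trans hn); lra.
  have := Heta h heta; rewrite -ute => He.
  have Lh : 'd J u h = t * 'd J u D + 'd J u (r t) by rewrite /h linearD linearZ.
  have HMr := HM (r t).
  have Me1 : M * e1 = `|D| ^+ 2 / 4.
    rewrite /e1; field; by rewrite gt_eqF.
  have epsD : eps * (`|D| + 1) = `|D| ^+ 2 / 4.
    rewrite /eps; field; by rewrite gt_eqF.
  have f1 : M * `|r t| <= t * (`|D| ^+ 2 / 4).
    rewrite -Me1 mulrCA ler_pM2l //; lra.
  have f2 : eps * `|h| <= t * (`|D| ^+ 2 / 4).
    rewrite -epsD mulrCA ler_pM2l //; lra.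
  move: He; rewrite Lh LD => He.
  have := ler_norm (J (ut t) - J u - (t * (- `|D| ^+ 2 - inner p D) + 'd J u (r t))).
  have := ler_norm ('d J u (r t)).
  have := normr_ge0 (r t).
  have tp : 0 <= t * inner p D by rewrite mulr_ge0 // ltW.
  nra.
case: Hn => e e0 He; exists e => // t /andP[t0 te]; apply: He => //=.
by rewrite sub0r normrN gtr0_norm.
Unshelve. all: by end_near.
Qed.
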